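(* Let $G$ be a graph with $L(G)=2l(G)$. Let $F_L, F_l$ be maximum matchings of $G$ with $\nu(G\setminus F_L)=L(G)$ and $\nu(G\setminus F_l)=l(G)$, and let $H_L$ be any maximum matching of $G\setminus F_L$. Then: (c1) $F_l\setminus F_L\subseteq H_L$; (c2) $H_L\setminus F_l$ is a maximum matching of $G\setminus F_l$; (c3) $F_L\setminus F_l$ is a maximum matching of $G\setminus F_l$.
   Context: Graphs are finite, undirected, without loops or multiple edges. $\nu(G)$ denotes the maximum size of a matching of $G$; a matching is maximum if it has $\nu(G)$ edges. For $F\subseteq E(G)$, $G\setminus F$ is the graph with vertex set $V(G)$ and edge set $E(G)\setminus F$. Define $L(G)=\max\{\nu(G\setminus F): F \text{ a maximum matching of } G\}$ and $l(G)=\min\{\nu(G\setminus F): F \text{ a maximum matching of } G\}$. *)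

(* Defs.v *)
(* A finite simple graph on vertex type T is represented by
   its edge set E : {set {set T}}, every edge being a 2-element vertex set. *)
From mathcomp Require Import all_boot.
Set Implicit Arguments. Unset Strict Implicit. Unset Printing Implicit Defensive.

Section Matchings.
Variable T : finType.

Definition simple_graph (E : {set {set T}}) : bool :=
  [forall x in E, #|x| == 2].

Definition matching (E M : {set {set T}}) : bool :=
  (M \subset E) &&
  [forall e1 in M, forall e2 in M, (e1 != e2) ==> [disjoint e1 & e2]].

Definition nu (E : {set {set T}}) : nat :=
  \max_(M in powerset E | matching E M) #|M|.

Definition max_matching (E M : {set {set T}}) : bool :=
  matching E M && (#|M| == nu E).

Definition Lg (E : {set {set T}}) : nat :=
  \max_(F in powerset E | max_matching E F) nu (E :\: F).

(* l(G) = min { nu(G \ F) : F maximum matching of G }; the neutral element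
   #|E| is an upper bound of every nu (E :\: F), and a maximum matching
   always exists (e.g. set0 is a matching), so this is the true minimum. *)
Definition lg (E : {set {set T}}) : nat :=
  \big[minn/#|E|]_(F in powerset E | max_matching E F) nu (E :\: F).

End Matchings.

(* Main.v *)
Require Import Defs.
From mathcomp Require Import all_boot.

Lemma match_le (T : finType) (E M : {set {set T}}) : matching E M -> #|M| <= nu E.
Proof.
move=> hM; rewrite /nu; apply: (@leq_bigmax_cond _ (fun M0 : {set {set T}} => (M0 \in powerset E) && matching E M0) (fun M0 => #|M0|) M).
by rewrite powersetE hM; case/andP: hM => ->.
Qed.

Lemma match_sub (T : finType) (E E' M M' : {set {set T}}) :
  matching E M -> M' \subset M -> M' \subset E' -> matching E' M'.
Proof.
case/andP=> _ /forallP h sMM sE; rewrite /matching sE /=.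
apply/forallP=> e1; apply/implyP=> h1; apply/forallP=> e2; apply/implyP=> h2.
by have /implyP := h e1; move/(_ (subsetP sMM _ h1))/forallP/(_ e2)/implyP/(_ (subsetP sMM _ h2)).
Qed.

Theorem theorem2 (T : finType) (E : {set {set T}}) (FL Fl HL : {set {set T}}) :
  simple_graph E ->
  Lg E = 2 * lg E ->
  max_matching E FL -> nu (E :\: FL) = Lg E ->
  max_matching E Fl -> nu (E :\: Fl) = lg E ->
  max_matching (E :\: FL) HL ->
  [/\ Fl :\: FL \subset HL,
      max_matching (E :\: Fl) (HL :\: Fl)
    & max_matching (E :\: Fl) (FL :\: Fl)].
Proof.
move=> _ hL /andP[mFL /eqP cFL] hnL /andP[mFl /eqP cFl] hnl /andP[mHL /eqP cHL].
have sFLE : FL \subset E by case/andP: mFL.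
have sFlE : Fl \subset E by case/andP: mFl.
have sHLE : HL \subset E :\: FL by case/andP: mHL.
have m1 : matching (E :\: Fl) (HL :\: Fl).
  apply: (match_sub _ _ _ _ _ mHL); first exact: subsetDl.
  apply/subsetP=> e; rewrite !inE => /andP[-> eH].
  by have := subsetP sHLE e eH; rewrite inE => /andP[_ ->].
have m2 : matching (E :\: Fl) (FL :\: Fl).
  apply: (match_sub _ _ _ _ _ mFL); first exact: subsetDl.
  apply/subsetP=> e; rewrite !inE => /andP[-> eH].
  by rewrite (subsetP sFLE e eH).
have le1 := match_le _ _ _ m1; have le2 := match_le _ _ _ m2.
rewrite hnl in le1 le2.
have ck : #|Fl :\: FL| = #|FL :\: Fl|.
  by rewrite !cardsD cFl cFL setIC.
have sI : HL :&: Fl \subset Fl :\: FL.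
  apply/subsetP=> e; rewrite !inE => /andP[eH ->].
  by have := subsetP sHLE e eH; rewrite inE => /andP[-> _].
have lek := subset_leq_card sI.
have hsum := cardsID Fl HL.
rewrite cHL hnL hL in hsum.
have e1 : #|HL :\: Fl| = lg E.
  apply/eqP; rewrite eqn_leq le1 /=; rewrite -(leq_add2l #|HL :&: Fl|) hsum.
  by rewrite mul2n -addnn leq_add2r (leq_trans lek) // ck.
have e2 : #|HL :&: Fl| = lg E.
  by move: hsum; rewrite e1 mul2n -addnn => /eqP; rewrite eqn_add2r => /eqP.
have e3 : #|FL :\: Fl| = lg E.
  apply/eqP; rewrite eqn_leq le2 -e2 -ck //.
split.
- have : HL :&: Fl == Fl :\: FL by rewrite eqEcard sI ck e3 e2 leqnn.
  by move/eqP <-; exact: subsetIl.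
- by rewrite /max_matching m1 e1 hnl eqxx.
- by rewrite /max_matching m2 e3 hnl eqxx.
Qed.
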